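(* Let ${\mathbb K}$ be a field, $n\geqslant 2$ and $N$ a positive integer. Let $L$ be a set of lines of $\mathrm{AG}_n({\mathbb K})$, let $D\subseteq\mathrm{PG}_{n-1}({\mathbb K})$ be the set of directions of the lines of $L$, and let $S$ be a set of points of $\mathrm{AG}_n({\mathbb K})$ such that every line of $L$ is incident with at least $N$ points of $S$. If $D$ contains an $N^{n-1}$ grid then, for any positive integer $r$, $$\binom{2r+n-2}{n}|S|\geqslant\binom{rN+n-1}{n}.$$
   Context: The direction of an affine line $\{u+\lambda v:\lambda\in{\mathbb K}\}$ is the point $\langle v\rangle$ of $\mathrm{PG}_{n-1}({\mathbb K})$. An $N^{n-1}$ grid in $\mathrm{PG}_{n-1}({\mathbb K})$ is a point set which, with respect to a suitable basis, has the form $\{\langle(a_1,\ldots,a_{n-1},1)\rangle : a_i\in A_i\}$, where each $A_i\subseteq{\mathbb K}$ has size $N$. *)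

(* Defs.v *)
From HB Require Import structures.
From mathcomp Require Import all_boot all_order all_algebra.
From mathcomp Require Import finmap.
Set Implicit Arguments. Unset Strict Implicit. Unset Printing Implicit Defensive.
Import GRing.Theory.
Local Open Scope ring_scope.

(* Points of AG_n(K) are row vectors 'rV[K]_n.  An affine line is given by a
   pair (u, v) with v <> 0; its point set is {u + lam v : lam in K}. *)
Definition on_line (K : fieldType) (n : nat) (uv : 'rV[K]_n * 'rV[K]_n)
  (x : 'rV[K]_n) : Prop :=
  exists lam : K, x = (fst uv) + lam *: (snd uv).

Definition incident_atleast (K : fieldType) (n : nat) (N : nat)
  (S : {fset 'rV[K]_n}) (uv : 'rV[K]_n * 'rV[K]_n) : Prop :=
  exists T : {fset 'rV[K]_n},
    [/\ (T `<=` S)%fset, (N <= #|` T|)%N & forall x, x \in T -> on_line uv x].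

(* D = set of directions of the lines of L, as a set of points of
   PG_{n-1}(K): the nonzero vector w represents a point of D iff
   <w> = <v> for some line (u,v) of L, i.e. w = c v with c <> 0. *)
Definition direction_set (K : fieldType) (n : nat)
  (L : 'rV[K]_n * 'rV[K]_n -> Prop) (w : 'rV[K]_n) : Prop :=
  exists uv, L uv /\ exists2 c : K, c != 0 & w = c *: (snd uv).

(* D contains an N^{n-1} grid: there is a basis (rows of an invertible
   matrix B) and sets A_0,...,A_{n-2} of size N such that every point
   <(a_0,...,a_{n-2},1)> (coordinates w.r.t. B) lies in D. *)
Definition contains_grid (K : fieldType) (n N : nat)
  (D : 'rV[K]_n -> Prop) : Prop :=
  exists (B : 'M[K]_n) (A : 'I_n -> {fset K}),
    [/\ B \in unitmx,
        (forall i : 'I_n, (i < n.-1)%N -> #|` A i| = N) &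
        forall a : 'rV[K]_n,
          (forall i : 'I_n, (i < n.-1)%N -> a ord0 i \in A i) ->
          (forall i : 'I_n, (i : nat) = n.-1 -> a ord0 i = 1) ->
          D (a *m B)].

(* Main.v *)
Require Import Defs.
From HB Require Import structures.
From mathcomp Require Import all_boot all_order all_algebra.
From mathcomp Require Import finmap.
From mathcomp Require Import mpoly.
From mathcomp Require Import ring zify.
Set Implicit Arguments. Unset Strict Implicit. Unset Printing Implicit Defensive.
Import GRing.Theory.
Local Open Scope ring_scope.
Section Univ.
Variable K : fieldType.

Lemma dvd_shift (h : {poly K}) (x : K) (s : nat) :
  (forall l, (l < s)%N -> (h \Po ('X + x%:P))`_l = 0) ->
  ('X - x%:P) ^+ s %| h.
Proof.
move=> H; set g := h \Po ('X + x%:P).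
have gE : g = drop_poly s g * 'X^s.
  rewrite -{1}(poly_take_drop s g).
  suff -> : take_poly s g = 0 by rewrite add0r.
  apply/polyP=> i; rewrite coef_take_poly coef0.
  by case: ifP => // /H.
have hE : h = g \Po ('X - x%:P).
  rewrite /g -comp_polyA comp_polyD comp_polyX comp_polyC.
  by rewrite subrK comp_polyXr.
rewrite hE gE comp_polyM comp_Xn_poly.
by rewrite dvdp_mulIr.
Qed.

Lemma univ_zero (h : {poly K}) (t s : nat) (xs : seq K) :
  (size h <= t.+1)%N -> uniq xs -> (t < size xs * s)%N ->
  (forall x, x \in xs -> forall l, (l < s)%N -> (h \Po ('X + x%:P))`_l = 0) ->
  h = 0.
Proof.
move=> sh uxs lt H.
have D : (\prod_(x <- xs) ('X - x%:P)) ^+ s %| h.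
  elim: xs uxs H {lt} => [|y ys IH] /= uxs H; first by rewrite big_nil expr1n dvd1p.
  case/andP: uxs => yn uys.
  rewrite big_cons exprMn Gauss_dvdp.
    rewrite dvd_shift ?IH // => [x xin|]; apply: H; rewrite inE ?xin ?orbT //.
    by rewrite eqxx.
  apply: coprimep_expl; apply: coprimep_expr.
  by rewrite coprimep_sym coprimep_XsubC root_prod_XsubC.
apply/eqP; apply: contraT => hn0.
have le := dvdp_leq hn0 D.
have E := size_exp (\prod_(x <- xs) ('X - x%:P)) s.
rewrite size_prod_XsubC /= in E.
have : ((size ((\prod_(x <- xs) ('X - x%:P)) ^+ s)).-1 <= t)%N.
  by move: (leq_trans le sh); case: (size _).
by rewrite E leqNgt lt.
Qed.
End Univ.

Notation sub h := (comp_mpoly [tuple h i | i < _]).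

Section MP.
Variable K : fieldType.


Lemma subX n l (h : 'I_n -> {mpoly K[l]}) i : sub h 'X_i = h i.
Proof. by rewrite comp_mpolyXU -tnth_nth tnth_mktuple. Qed.

Lemma subC n l (h : 'I_n -> {mpoly K[l]}) c : sub h c%:MP = c%:MP.
Proof. by rewrite comp_mpolyC. Qed.

Lemma subD n l (h : 'I_n -> {mpoly K[l]}) p q : sub h (p + q) = sub h p + sub h q.
Proof. by rewrite rmorphD. Qed.

Lemma subB n l (h : 'I_n -> {mpoly K[l]}) p q : sub h (p - q) = sub h p - sub h q.
Proof. by rewrite rmorphB. Qed.

Lemma subM n l (h : 'I_n -> {mpoly K[l]}) p q : sub h (p * q) = sub h p * sub h q.
Proof. by rewrite rmorphM. Qed.

Lemma subZ n l (h : 'I_n -> {mpoly K[l]}) c p : sub h (c *: p) = c *: sub h p.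
Proof. by rewrite comp_mpolyZ. Qed.

Lemma subEX n l (h : 'I_n -> {mpoly K[l]}) p :
  sub h p = \sum_(m <- msupp p) p@_m *: \prod_(i < n) h i ^+ m i.
Proof.
rewrite comp_mpolyE; apply: eq_bigr => m _; congr (_ *: _).
by apply: eq_bigr => i _; rewrite tnth_mktuple.
Qed.

Lemma subXm n l (h : 'I_n -> {mpoly K[l]}) m :
  sub h 'X_[m] = \prod_(i < n) h i ^+ m i.
Proof.
rewrite comp_mpolyX; apply: eq_bigr => i _; by rewrite tnth_mktuple.
Qed.

Lemma meq n (T : nzRingType) (phi psi : {mpoly K[n]} -> T) :
  (forall x y, phi (x + y) = phi x + phi y) ->
  (forall x y, psi (x + y) = psi x + psi y) ->
  (forall x y, phi (x * y) = phi x * phi y) ->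
  (forall x y, psi (x * y) = psi x * psi y) ->
  (forall c, phi c%:MP = psi c%:MP) ->
  (forall i, phi 'X_i = psi 'X_i) -> forall p, phi p = psi p.
Proof.
move=> phD psD phM psM hC hX.
have hXn i e : phi ('X_i ^+ e) = psi ('X_i ^+ e).
  elim: e => [|e IH]; first by rewrite !expr0 -mpolyC1 hC.
  by rewrite !exprS phM psM IH hX.
have hXm m : phi 'X_[m] = psi 'X_[m].
  rewrite mpolyXE_id; elim/big_rec: _ => [|i x _ IH]; first by rewrite -mpolyC1 hC.
  by rewrite phM psM IH hXn.
elim/mpolyind => [|c m p _ _ IH]; first by rewrite -mpolyC0 hC.
by rewrite phD psD -mul_mpolyC phM psM hC hXm IH.
Qed.

Definition wt n (w : 'I_n -> nat) (m : 'X_{1..n}) := (\sum_(i < n) m i * w i)%N.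

Lemma wtD n (w : 'I_n -> nat) m1 m2 : wt w (m1 + m2)%MM = (wt w m1 + wt w m2)%N.
Proof. by rewrite /wt -big_split /=; apply: eq_bigr => i _; rewrite mnmDE mulnDl. Qed.

Lemma wt0 n (w : 'I_n -> nat) : wt w 0%MM = 0%N.
Proof. by rewrite /wt big1 // => i _; rewrite mnm0E. Qed.

Lemma wt1 n (m : 'X_{1..n}) : wt (fun _ => 1%N) m = mdeg m.
Proof. by rewrite /wt mdegE; apply: eq_bigr => i _; rewrite muln1. Qed.

Definition sge n (w : 'I_n -> nat) j (p : {mpoly K[n]}) :=
  forall m, m \in msupp p -> (j <= wt w m)%N.
Definition sle n (w : 'I_n -> nat) j (p : {mpoly K[n]}) :=
  forall m, m \in msupp p -> (wt w m <= j)%N.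
Definition slt n (w : 'I_n -> nat) j (p : {mpoly K[n]}) :=
  forall m, m \in msupp p -> (wt w m < j)%N.

Section Closure.
Variables (n : nat) (w : 'I_n -> nat).
Implicit Types p q : {mpoly K[n]}.

Lemma sge0 j : sge w j 0. Proof. by move=> m; rewrite msupp0. Qed.
Lemma sle0 j : sle w j 0. Proof. by move=> m; rewrite msupp0. Qed.
Lemma slt0 j : slt w j 0. Proof. by move=> m; rewrite msupp0. Qed.

Lemma sgeD j p q : sge w j p -> sge w j q -> sge w j (p + q).
Proof. by move=> hp hq m /msuppD_le; rewrite mem_cat => /orP[/hp|/hq]. Qed.
Lemma sleD j p q : sle w j p -> sle w j q -> sle w j (p + q).
Proof. by move=> hp hq m /msuppD_le; rewrite mem_cat => /orP[/hp|/hq]. Qed.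
Lemma sltD j p q : slt w j p -> slt w j q -> slt w j (p + q).
Proof. by move=> hp hq m /msuppD_le; rewrite mem_cat => /orP[/hp|/hq]. Qed.
Lemma sgeB j p q : sge w j p -> sge w j q -> sge w j (p - q).
Proof. by move=> hp hq m /msuppB_le; rewrite mem_cat => /orP[/hp|/hq]. Qed.
Lemma sleB j p q : sle w j p -> sle w j q -> sle w j (p - q).
Proof. by move=> hp hq m /msuppB_le; rewrite mem_cat => /orP[/hp|/hq]. Qed.
Lemma sltB j p q : slt w j p -> slt w j q -> slt w j (p - q).
Proof. by move=> hp hq m /msuppB_le; rewrite mem_cat => /orP[/hp|/hq]. Qed.
Lemma sgeZ j c p : sge w j p -> sge w j (c *: p).
Proof. by move=> hp m /msuppZ_le /hp. Qed.
Lemma sleZ j c p : sle w j p -> sle w j (c *: p).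
Proof. by move=> hp m /msuppZ_le /hp. Qed.
Lemma sltZ j c p : slt w j p -> slt w j (c *: p).
Proof. by move=> hp m /msuppZ_le /hp. Qed.

Lemma sge_sum (I : Type) (r : seq I) (F : I -> {mpoly K[n]}) j :
  (forall i, sge w j (F i)) -> sge w j (\sum_(i <- r) F i).
Proof. by move=> h; elim/big_rec: _ => [|i x _ IH]; [exact: sge0|exact: sgeD]. Qed.
Lemma sle_sum (I : Type) (r : seq I) (F : I -> {mpoly K[n]}) j :
  (forall i, sle w j (F i)) -> sle w j (\sum_(i <- r) F i).
Proof. by move=> h; elim/big_rec: _ => [|i x _ IH]; [exact: sle0|exact: sleD]. Qed.
Lemma slt_sum (I : Type) (r : seq I) (F : I -> {mpoly K[n]}) j :
  (forall i, slt w j (F i)) -> slt w j (\sum_(i <- r) F i).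
Proof. by move=> h; elim/big_rec: _ => [|i x _ IH]; [exact: slt0|exact: sltD]. Qed.

Lemma suppM_P p q m : m \in msupp (p * q) ->
  exists2 m1, m1 \in msupp p & exists2 m2, m2 \in msupp q & m = (m1 + m2)%MM.
Proof.
move/msuppM_le/allpairsP => [[m1 m2] /= [h1 h2 ->]].
by exists m1 => //; exists m2.
Qed.

Lemma sgeM a b p q : sge w a p -> sge w b q -> sge w (a + b) (p * q).
Proof.
move=> hp hq m /suppM_P [m1 /hp h1 [m2 /hq h2 ->]].
by rewrite wtD leq_add.
Qed.
Lemma sleM a b p q : sle w a p -> sle w b q -> sle w (a + b) (p * q).
Proof.
move=> hp hq m /suppM_P [m1 /hp h1 [m2 /hq h2 ->]].
by rewrite wtD leq_add.
Qed.
Lemma sltM a b p q : slt w a p -> sle w b q -> slt w (a + b) (p * q).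
Proof.
move=> hp hq m /suppM_P [m1 /hp h1 [m2 /hq h2 ->]].
by rewrite wtD -addSn leq_add.
Qed.

Lemma sge1 : sge w 0 1. Proof. by []. Qed.
Lemma sle1 : sle w 0 1.
Proof. by move=> m; rewrite msupp1 inE => /eqP ->; rewrite wt0. Qed.

Lemma sgeX a e p : sge w a p -> sge w (a * e) (p ^+ e).
Proof.
move=> hp; elim: e => [|e IH]; first by rewrite muln0 expr0.
by rewrite exprS mulnS; apply: sgeM.
Qed.
Lemma sleX a e p : sle w a p -> sle w (a * e) (p ^+ e).
Proof.
move=> hp; elim: e => [|e IH]; first by rewrite muln0 expr0; apply: sle1.
by rewrite exprS mulnS; apply: sleM.
Qed.

Lemma sge_mono a b p : (a <= b)%N -> sge w b p -> sge w a p.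
Proof. by move=> ab hp m /hp; apply: leq_trans. Qed.
Lemma sle_mono a b p : (a <= b)%N -> sle w a p -> sle w b p.
Proof. by move=> ab hp m /hp /leq_trans; apply. Qed.
Lemma slt_mono a b p : (a <= b)%N -> slt w a p -> slt w b p.
Proof. by move=> ab hp m /hp /leq_trans; apply. Qed.

Lemma sgeE j p : sge w j p -> forall m, (wt w m < j)%N -> p@_m = 0.
Proof.
move=> hp m lt; apply: memN_msupp_eq0; apply/negP => /hp.
by rewrite leqNgt lt.
Qed.
Lemma sleE j p : sle w j p -> forall m, (j < wt w m)%N -> p@_m = 0.
Proof.
move=> hp m lt; apply: memN_msupp_eq0; apply/negP => /hp.
by rewrite leqNgt lt.
Qed.
Lemma sltE j p : slt w j p -> forall m, (j <= wt w m)%N -> p@_m = 0.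
Proof.
move=> hp m lt; apply: memN_msupp_eq0; apply/negP => /hp.
by rewrite ltnNge lt.
Qed.

Lemma sleC j c : sle w j c%:MP.
Proof.
move=> m; rewrite msuppC; case: ifP => _ //; rewrite inE => /eqP ->.
by rewrite wt0.
Qed.
Lemma sltC j c : slt w j.+1 c%:MP.
Proof. by move=> m /sleC; apply. Qed.

Lemma sgeXU i : sge w (w i) 'X_i.
Proof.
move=> m; rewrite msuppX inE => /eqP ->; rewrite /wt (bigD1 i) //=.
by rewrite mnm1E eqxx mul1n leq_addr.
Qed.
Lemma wtU i : wt w U_(i)%MM = w i.
Proof.
rewrite /wt (bigD1 i) //= mnm1E eqxx mul1n big1 ?addn0 // => j ji.
by rewrite mnm1E eq_sym (negbTE ji).
Qed.
Lemma sleXU i : sle w (w i) 'X_i.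
Proof. by move=> m; rewrite msuppX inE => /eqP ->; rewrite wtU. Qed.

End Closure.

Lemma sub_sge n l (w : 'I_n -> nat) (w' : 'I_l -> nat) (h : 'I_n -> {mpoly K[l]}) j p :
  sge w j p -> (forall i, sge w' (w i) (h i)) -> sge w' j (sub h p).
Proof.
move=> hp hh; rewrite subEX; apply: sge_sum => m.
case: (boolP (m \in msupp p)) => mp; last first.
  by rewrite memN_msupp_eq0 // scale0r; apply: sge0.
apply: sgeZ; apply: (sge_mono (hp _ mp)); rewrite /wt.
elim/big_rec2: _ => [|i a x _ IH]; first by apply: sge1.
by rewrite mulnC; apply: sgeM => //; apply: sgeX.
Qed.

Lemma sub_sle n l (w : 'I_n -> nat) (w' : 'I_l -> nat) (h : 'I_n -> {mpoly K[l]}) j p :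
  sle w j p -> (forall i, sle w' (w i) (h i)) -> sle w' j (sub h p).
Proof.
move=> hp hh; rewrite subEX; apply: sle_sum => m.
case: (boolP (m \in msupp p)) => mp; last first.
  by rewrite memN_msupp_eq0 // scale0r; apply: sle0.
apply: sleZ; apply: (sle_mono (hp _ mp)); rewrite /wt.
elim/big_rec2: _ => [|i a x _ IH]; first by apply: sle1.
by rewrite mulnC; apply: sleM => //; apply: sleX.
Qed.

End MP.

Section Uni.
Local Notation widen := (widen_ord (leqnSn _)).
Variable K : fieldType.
Variable k : nat.

Definition ext (g : 'X_{1..k}) (l : nat) : 'X_{1..k.+1} :=
  (mnmwiden g + U_(ord_max) *+ l)%MM.
Definition restr (m : 'X_{1..k.+1}) : 'X_{1..k} := [multinom m (widen i) | i < k].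

Lemma ext_widen g l i : ext g l (widen i) = g i.
Proof.
rewrite /ext mnmDE mnmwiden_widen mulmnE mnm1E.
have -> : (ord_max == widen i :> 'I_k.+1) = false.
  by apply/negbTE; rewrite -val_eqE /= neq_ltn ltn_ord orbT.
by rewrite mul0n addn0.
Qed.

Lemma ext_max g l : ext g l ord_max = l.
Proof. by rewrite /ext mnmDE mnmwiden_ordmax mulmnE mnm1E eqxx mul1n. Qed.

Lemma restr_ext g l : restr (ext g l) = g.
Proof. by apply/mnmP => i; rewrite mnmE ext_widen. Qed.

Lemma ext_restr m : ext (restr m) (m ord_max) = m.
Proof.
apply/mnmP => i; have [ik|] := ltnP i k.
  have -> : i = widen (Ordinal ik) by apply: val_inj.
  by rewrite ext_widen mnmE.
move=> ki; have -> : i = ord_max.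
  by apply: val_inj; apply/eqP; rewrite /= eqn_leq ki andbT -ltnS ltn_ord.
by rewrite ext_max.
Qed.

Lemma ext_eq m g l : (m == ext g l) = (restr m == g) && (m ord_max == l).
Proof.
apply/eqP/andP => [->|[/eqP <- /eqP <-]]; last by rewrite ext_restr.
by rewrite restr_ext ext_max.
Qed.

Lemma mdeg_ext g l : mdeg (ext g l) = (mdeg g + l)%N.
Proof.
rewrite mdegE big_ord_recr /= ext_max; congr (_ + _)%N.
by rewrite mdegE; apply: eq_bigr => i _; rewrite ext_widen.
Qed.

Definition wZ (i : 'I_k.+1) : nat := (i != ord_max).
Definition wL (i : 'I_k.+1) : nat := (i == ord_max).

Lemma wtZ_ext g l : wt wZ (ext g l) = mdeg g.
Proof.
rewrite /wt big_ord_recr /= /wZ eqxx muln0 addn0 mdegE.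
apply: eq_bigr => i _; rewrite ext_widen.
by rewrite -val_eqE /= ltn_eqF // muln1.
Qed.

Lemma wtL_ext g l : wt wL (ext g l) = l.
Proof.
rewrite /wt big_ord_recr /= /wL eqxx muln1 ext_max big1 // => i _.
by rewrite -val_eqE /= ltn_eqF // muln0.
Qed.

Lemma mcoeff_sum n (I : Type) (r : seq I) (F : I -> {mpoly K[n]}) m :
  (\sum_(i <- r) F i)@_m = \sum_(i <- r) (F i)@_m.
Proof. by elim: r => [|i r IH]; rewrite ?big_nil ?mcoeff0 // !big_cons mcoeffD IH. Qed.

Lemma muni_coef (P : {mpoly K[k.+1]}) l g : ((muni P)`_l)@_g = P@_(ext g l).
Proof.
rewrite muniE coef_sum mcoeff_sum.
rewrite [P in RHS]mpolyE mcoeff_sum; apply: eq_bigr => m _.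
rewrite coefZ coefXn [in RHS]mcoeffZ [in RHS]mcoeffX ext_eq.
case: (l =P m ord_max) => [->|ne]; last first.
  rewrite mulr0 mcoeff0 andbC.
  by case: eqP => [e|]; [case: ne; rewrite e|rewrite mulr0].
by rewrite eqxx mulr1 mcoeffZ mcoeffX andbT.
Qed.

Lemma coef_comp_wide (R : comNzRingType) (p q : {poly R}) N n :
  (size p <= N)%N -> (p \Po q)`_n = \sum_(i < N) p`_i * (q ^+ i)`_n.
Proof.
move=> sp; rewrite coef_comp_poly (big_ord_widen N (fun i => p`_i * (q ^+ i)`_n) sp) /=.
rewrite [RHS](bigID (fun i : 'I_N => (i < size p)%N)) /= [X in _ + X]big1 ?addr0 //.
by move=> i; rewrite -leqNgt => /(nth_default 0) ->; rewrite mul0r.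
Qed.

Lemma map_mcoeff_comp (P : {poly {mpoly K[k]}}) (q : {poly K}) g :
  map_poly (mcoeff g) (P \Po map_poly (@mpolyC k K) q) = map_poly (mcoeff g) P \Po q.
Proof.
apply/polyP => n.
rewrite coef_map_id0 ?mcoeff0 // (coef_comp_wide _ _ (leqnn (size P))).
rewrite (coef_comp_wide _ _ (size_poly _ _)) raddf_sum /=.
apply: eq_bigr => i _; rewrite -rmorphXn coef_map /= mulrC mcoeffCM.
by rewrite coef_map_id0 ?mcoeff0 // mulrC.
Qed.

End Uni.

Section Grid.
Variable K : fieldType.
Local Notation widen := (widen_ord (leqnSn _)).

Definition shiftv k (a : 'I_k -> K) : 'I_k -> {mpoly K[k]} := fun i => 'X_i + (a i)%:MP.

Lemma lift_widen k (j : 'I_k) : lift ord_max j = widen j.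
Proof. by apply: val_inj; rewrite /= /bump leqNgt ltn_ord. Qed.

Definition extv k (a : 'I_k -> K) (x : K) : 'I_k.+1 -> K :=
  fun i => if unlift ord_max i is Some j then a j else x.

Lemma extv_widen k (a : 'I_k -> K) x j : extv a x (widen j) = a j.
Proof. by rewrite -lift_widen /extv liftK. Qed.

Lemma extv_max k (a : 'I_k -> K) x : extv a x ord_max = x.
Proof. by rewrite /extv unlift_none. Qed.

Lemma muniXw k (j : 'I_k) : muni ('X_(widen j) : {mpoly K[k.+1]}) = ('X_j)%:P.
Proof.
rewrite muniE msuppX big_seq1 mcoeffX eqxx scale1r mnm1E.
have -> : (widen j == ord_max :> 'I_k.+1) = false.
  by apply/negbTE; rewrite -val_eqE /= neq_ltn ltn_ord.
rewrite expr0 -mul_polyC mulr1.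
congr (_%:P); congr ('X_[_]); apply/mnmP => i.
rewrite mnmE !mnm1E.
by rewrite -val_eqE /= val_eqE.
Qed.

Lemma muniXmax k : muni ('X_ord_max : {mpoly K[k.+1]}) = 'X.
Proof.
rewrite muniE msuppX big_seq1 mcoeffX eqxx scale1r (mnm1E ord_max ord_max) eqxx expr1.
have -> : [multinom U_(ord_max : 'I_k.+1)%MM (widen i) | i < k] = 0%MM.
  apply/mnmP => i; rewrite mnmE mnm0E (mnm1E ord_max).
  by apply/eqP; rewrite eqb0 -val_eqE /= neq_ltn ltn_ord orbT.
by rewrite mpolyX0 scale1r.
Qed.

Lemma muni_tau k (a : 'I_k -> K) x (p : {mpoly K[k.+1]}) :
  muni (sub (shiftv (extv a x)) p) =
  map_poly (sub (shiftv a)) (muni p) \Po map_poly (@mpolyC k K) ('X + x%:P).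
Proof.
move: p; apply: meq.
- by move=> p q; rewrite rmorphD muniD.
- by move=> p q; rewrite muniD [X in X \Po _]rmorphD comp_polyD.
- by move=> p q; rewrite rmorphM muniM.
- by move=> p q; rewrite muniM [X in X \Po _]rmorphM comp_polyM.
- by move=> c; rewrite comp_mpolyC muniC map_polyC /= comp_mpolyC comp_polyC.
move=> i; rewrite subX /shiftv; case: (unliftP ord_max i) => [j ->|->].
  rewrite lift_widen extv_widen muniD muniXw muniC map_polyC /= subX /shiftv.
  by rewrite comp_polyC rmorphD.
rewrite extv_max muniD muniXmax muniC map_polyX comp_polyX.
by rewrite rmorphD /= map_polyX map_polyC.
Qed.

End Grid.

Section GridLemma.
Variable K : fieldType.
Local Notation widen := (widen_ord (leqnSn _)).

Lemma grid_lemma (N : nat) (A : nat -> seq K) :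
  (0 < N)%N -> (forall j, uniq (A j)) -> (forall j, size (A j) = N) ->
  forall k r (g : {mpoly K[k]}),
  (forall b, (r * N <= mdeg b)%N -> g@_b = 0) ->
  (forall a : 'I_k -> K, (forall i : 'I_k, a i \in A i) ->
     forall b, (mdeg b < r)%N -> (sub (shiftv a) g)@_b = 0) ->
  g = 0.
Proof.
move=> N0 uA sA; elim => [|k IH] r g Hdeg Hgrid.
  rewrite (nvar0_mpolyC g); set c := g@_0%MM.
  case: r Hdeg Hgrid => [|r] Hdeg Hgrid.
    by rewrite /c Hdeg ?mpolyC0.
  have ha : forall i : 'I_0, (fun _ => 0 : K) i \in A i by case.
  have := Hgrid _ ha 0%MM; rewrite mdeg0 => /(_ isT).
  by rewrite (nvar0_mpolyC g) comp_mpolyC mcoeffC eqxx mulr1 -/c => ->.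
apply/eqP; apply: contraT => gn0.
set P := muni g.
have Pn0 : P != 0.
  apply/eqP => P0; move/eqP: gn0; apply.
  apply/mpolyP => m; rewrite mcoeff0 -(ext_restr m) -muni_coef -/P P0.
  by rewrite coef0 mcoeff0.
set t := (size P).-1; set gt := P`_t.
have gtn0 : gt != 0 by rewrite /gt /t -lead_coefE lead_coef_eq0.
have [g0 hg0] : exists g0, gt@_g0 != 0.
  by exists (mlead gt); rewrite -mcoeff_msupp mlead_supp.
have tlt : (t < r * N)%N.
  rewrite ltnNge; apply/negP => le; move: hg0; rewrite /gt /P muni_coef Hdeg ?eqxx //.
  by rewrite mdeg_ext (leq_trans le) // leq_addl.
set s := (t %/ N)%N.
have sN : (s * N <= t)%N := leq_trunc_div t N.
have sr : (s < r)%N by rewrite -(ltn_pmul2r N0); apply: leq_ltn_trans sN tlt.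
have gt0 : gt = 0.
  apply: (IH (r - s)%N).
    move=> b hb; rewrite /gt /P muni_coef; apply: Hdeg; rewrite mdeg_ext.
    by rewrite -(subnK (ltnW sr)) mulnDl; apply: leq_add.
  move=> a' ha' b hb; apply/eqP; apply: contraT => hne.
  set H := map_poly (mcoeff b) (map_poly (sub (shiftv a')) P).
  have Ht : H`_t = (sub (shiftv a') gt)@_b.
    by rewrite /H coef_map_id0 ?mcoeff0 // coef_map.
  have Hn0 : H != 0 by apply/eqP => H0; move: hne; rewrite -Ht H0 coef0 eqxx.
  suff H0 : H = 0 by move/eqP: Hn0; rewrite H0.
  apply: (univ_zero (t := t) (s := (r - mdeg b)%N) (xs := A k)).
  - apply/leq_sizeP => j hj; rewrite /H coef_map_id0 ?mcoeff0 // coef_map /=.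
    rewrite nth_default ?rmorph0 ?mcoeff0 //.
    by rewrite (leq_trans _ hj) // /t; case: (size P).
  - exact: uA.
  - rewrite sA (leq_trans (ltn_ceil t N0)) // -/s mulnC leq_pmul2l //.
    by rewrite ltn_subRL addnC -ltn_subRL.
  move=> x xA l hl.
  rewrite /H -map_mcoeff_comp -muni_tau coef_map_id0 ?mcoeff0 // muni_coef.
  apply: Hgrid; last by rewrite mdeg_ext -ltn_subRL.
  move=> i; case: (unliftP ord_max i) => [j ->|->].
    by rewrite lift_widen extv_widen /= ha'.
  by rewrite extv_max.
by rewrite gt0 eqxx in gtn0.
Qed.

End GridLemma.

Section Comp.
Variable K : fieldType.

Lemma sub_comp n l q (h2 : 'I_n -> {mpoly K[l]}) (h1 : 'I_l -> {mpoly K[q]}) p :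
  sub h1 (sub h2 p) = sub (fun i => sub h1 (h2 i)) p.
Proof.
move: p; apply: meq.
- by move=> x y; rewrite !rmorphD.
- by move=> x y; rewrite rmorphD.
- by move=> x y; rewrite !rmorphM.
- by move=> x y; rewrite rmorphM.
- by move=> c; rewrite !comp_mpolyC.
by move=> i; rewrite !subX.
Qed.

Lemma sub_ext n l (h h' : 'I_n -> {mpoly K[l]}) p : h =1 h' -> sub h p = sub h' p.
Proof. by move=> e; rewrite (eq_mktuple _ e). Qed.

Lemma sltM' n (w : 'I_n -> nat) a b (p q : {mpoly K[n]}) :
  sle w a p -> slt w b q -> slt w (a + b) (p * q).
Proof. by move=> hp hq; rewrite mulrC addnC; apply: sltM. Qed.

Lemma slt_powB n (w : 'I_n -> nat) a e (p q : {mpoly K[n]}) :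
  sle w a p -> sle w a q -> slt w a (p - q) -> slt w (a * e) (p ^+ e - q ^+ e).
Proof.
move=> hp hq hd; elim: e => [|e IH]; first by rewrite !expr0 subrr; apply: slt0.
have -> : p ^+ e.+1 - q ^+ e.+1 = (p - q) * p ^+ e + q * (p ^+ e - q ^+ e).
  by rewrite !exprS; ring.
rewrite mulnS; apply: sltD; first by apply: sltM => //; apply: sleX.
exact: sltM'.
Qed.

Lemma diff_prod n l (w : 'I_n -> nat) (w' : 'I_l -> nat) (h1 h2 : 'I_n -> {mpoly K[l]}) :
  (forall i, sle w' (w i) (h1 i)) -> (forall i, sle w' (w i) (h2 i)) ->
  (forall i, slt w' (w i) (h1 i - h2 i)) ->
  forall m, slt w' (wt w m) (\prod_(i < n) h1 i ^+ m i - \prod_(i < n) h2 i ^+ m i).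
Proof.
move=> s1 s2 sd m; rewrite /wt.
pose Q (x y : {mpoly K[l]}) (z : nat) := [/\ sle w' z x, sle w' z y & slt w' z (x - y)].
suff [] : Q (\prod_(i < n) h1 i ^+ m i) (\prod_(i < n) h2 i ^+ m i) (\sum_(i < n) m i * w i)%N by [].
apply: (big_rec3 Q).
  by split; [apply: sle1|apply: sle1|rewrite subrr; apply: slt0].
move=> i x y z _ [hx hy hxy]; rewrite mulnC; split.
- by apply: sleM => //; apply: sleX.
- by apply: sleM => //; apply: sleX.
have -> : h1 i ^+ m i * x - h2 i ^+ m i * y =
   (h1 i ^+ m i - h2 i ^+ m i) * x + h2 i ^+ m i * (x - y) by ring.
apply: sltD; first by apply: sltM => //; apply: slt_powB.
by apply: sltM' => //; apply: sleX.
Qed.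

End Comp.

Section Line.
Variable K : fieldType.
Variable k : nat.
Local Notation widen := (widen_ord (leqnSn _)).
Local Notation Xm := ('X_ord_max : {mpoly K[k.+1]}).
Local Notation one := (fun _ : 'I_k.+1 => 1%N).

Definition psi (a c : 'I_k -> K) (i : 'I_k.+1) : {mpoly K[k.+1]} :=
  if unlift ord_max i is Some j then (c j)%:MP + Xm * ('X_i + (a j)%:MP) else Xm.
Definition rho (a c : 'I_k -> K) (i : 'I_k.+1) : {mpoly K[k.+1]} :=
  if unlift ord_max i is Some j then (c j)%:MP + (a j)%:MP * Xm + 'X_i else Xm.
Definition sig (i : 'I_k.+1) : {mpoly K[k.+1]} :=
  if unlift ord_max i is Some j then Xm * 'X_i else Xm.
Definition shl (mu : K) (i : 'I_k.+1) : {mpoly K[k.+1]} :=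
  if unlift ord_max i is Some j then 'X_i else Xm + mu%:MP.
Definition lam (a : 'I_k -> K) (i : 'I_k.+1) : {mpoly K[k.+1]} :=
  if unlift ord_max i is Some j then (a j)%:MP * Xm + 'X_i else Xm.
Definition pt (a c : 'I_k -> K) (mu : K) (i : 'I_k.+1) : K :=
  if unlift ord_max i is Some j then c j + mu * a j else mu.

Lemma muni_shl mu (p : {mpoly K[k.+1]}) :
  muni (sub (shl mu) p) = muni p \Po map_poly (@mpolyC k K) ('X + mu%:P).
Proof.
move: p; apply: meq.
- by move=> p q; rewrite rmorphD muniD.
- by move=> p q; rewrite muniD comp_polyD.
- by move=> p q; rewrite rmorphM muniM.
- by move=> p q; rewrite muniM comp_polyM.
- by move=> c; rewrite comp_mpolyC muniC comp_polyC.
move=> i; rewrite subX /shl; case: (unliftP ord_max i) => [j ->|->].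
  by rewrite ?liftK lift_widen muniXw comp_polyC.
rewrite ?unlift_none muniD muniXmax muniC comp_polyX.
by rewrite rmorphD /= map_polyX map_polyC.
Qed.

Lemma shl_rho a c mu (f : {mpoly K[k.+1]}) :
  sub (shl mu) (sub (rho a c) f) = sub (lam a) (sub (shiftv (pt a c mu)) f).
Proof.
rewrite !sub_comp; apply: sub_ext => i.
rewrite /rho /shiftv /pt; case: (unliftP ord_max i) => [j ->|->].
  rewrite ?liftK !rmorphD rmorphM /= !subX /shl /lam ?liftK ?unlift_none !comp_mpolyC.
  by rewrite mpolyCM; ring.
rewrite ?unlift_none rmorphD /= !subX comp_mpolyC /shl /lam ?unlift_none.
by [].
Qed.

Lemma rho_sig a c (f : {mpoly K[k.+1]}) :
  sub (psi a c) f = sub sig (sub (rho a c) f).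
Proof.
rewrite sub_comp; apply: sub_ext => i.
rewrite /rho /psi; case: (unliftP ord_max i) => [j ->|_].
  rewrite ?liftK !rmorphD rmorphM /= !subX /sig ?liftK ?unlift_none !comp_mpolyC.
  by ring.
by rewrite ?unlift_none subX /sig unlift_none.
Qed.

Lemma sge_any n (w : 'I_n -> nat) (p : {mpoly K[n]}) : sge w 0 p.
Proof. by []. Qed.

Lemma line_lemma (f : {mpoly K[k.+1]}) (e m r N : nat) (a c : 'I_k -> K) (mus : seq K) :
  sle one e f -> uniq mus -> size mus = N ->
  (forall mu, mu \in mus -> sge one m (sub (shiftv (pt a c mu)) f)) ->
  (forall j, (j < r)%N -> (e < N * (m - j))%N) ->
  forall b, (mdeg b < r)%N -> (sub (psi a c) f)@_(ext b e) = 0.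
Proof.
move=> hf umus smus hS hN.
set R := sub (rho a c) f.
have sR : sle one e R.
  apply: (sub_sle hf) => i; rewrite /rho; case: (unliftP ord_max i) => [j ->|_].
    rewrite ?liftK; apply: sleD; first (apply: sleD; first exact: sleC).
      by rewrite -[1%N]/(0 + 1)%N; apply: sleM; [apply: sleC|apply: sleXU].
    exact: sleXU.
  by rewrite ?unlift_none; apply: sleXU.
have RZ : forall g l, (mdeg g < r)%N -> R@_(ext g l) = 0.
  move=> g l hg; set h := map_poly (mcoeff g) (muni R).
  suff h0 : h = 0.
    have := congr1 (fun p : {poly K} => p`_l) h0.
    by rewrite /h coef_map_id0 ?mcoeff0 // muni_coef coef0.
  apply: (univ_zero (t := e) (s := (m - mdeg g)%N) (xs := mus)) => //.
  - apply/leq_sizeP => j hj; rewrite /h coef_map_id0 ?mcoeff0 // muni_coef.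
    by apply: (sleE sR); rewrite wt1 mdeg_ext (leq_trans hj) // leq_addl.
  - by rewrite smus; apply: hN.
  move=> mu hmu l2 hl.
  rewrite /h -map_mcoeff_comp -muni_shl coef_map_id0 ?mcoeff0 // muni_coef.
  rewrite /R shl_rho; apply: (sgeE (w := one) (j := m)).
    apply: (sub_sge (hS _ hmu)) => i; rewrite /lam.
    case: (unliftP ord_max i) => [j ->|_]; last by rewrite ?unlift_none; apply: sgeXU.
    rewrite ?liftK; apply: sgeD; last exact: sgeXU.
    by rewrite -[1%N]/(0 + 1)%N; apply: sgeM; [apply: sge_any|apply: sgeXU].
  by rewrite wt1 mdeg_ext -ltn_subRL.
have sZ : sge (@wZ k) r R.
  move=> mono hmono; rewrite -(ext_restr mono) wtZ_ext leqNgt; apply/negP => lt.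
  by move: hmono; rewrite mcoeff_msupp -(ext_restr mono) RZ // eqxx.
move=> b hb; rewrite rho_sig; apply: (sgeE (w := @wZ k) (j := r)); last by rewrite wtZ_ext.
apply: (sub_sge sZ) => i; rewrite /sig.
case: (unliftP ord_max i) => [j ->|->]; last by rewrite /wZ eqxx; apply: sge_any.
rewrite ?liftK -[wZ _]/(0 + wZ (lift ord_max j))%N.
by apply: sgeM; [apply: sge_any|apply: sgeXU].
Qed.

End Line.

Section G.
Variable K : fieldType.
Variable k : nat.
Local Notation widen := (widen_ord (leqnSn _)).
Local Notation Xm := ('X_ord_max : {mpoly K[k.+1]}).
Local Notation one := (fun _ : 'I_k.+1 => 1%N).
Local Notation z := (fun _ : 'I_k => 0 : K).

Lemma wL_max : wL (@ord_max k) = 1%N. Proof. by rewrite /wL eqxx. Qed.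
Lemma wZ_max : wZ (@ord_max k) = 0%N. Proof. by rewrite /wZ eqxx. Qed.
Lemma lift_max_neq (j : 'I_k) : (lift ord_max j == ord_max) = false.
Proof. by apply/negbTE; rewrite -val_eqE /= /bump leqNgt ltn_ord /= neq_ltn ltn_ord. Qed.
Lemma wL_lift (j : 'I_k) : wL (lift ord_max j) = 0%N. Proof. by rewrite /wL lift_max_neq. Qed.
Lemma wZ_lift (j : 'I_k) : wZ (lift ord_max j) = 1%N. Proof. by rewrite /wZ lift_max_neq. Qed.

Definition Gp (f : {mpoly K[k.+1]}) e : {mpoly K[k]} := (muni (sub (psi z z) f))`_e.

Lemma Gp_coef f e b : (Gp f e)@_b = (sub (psi z z) f)@_(ext b e).
Proof. by rewrite /Gp muni_coef. Qed.

Lemma G_shift f e a : sub (shiftv a) (Gp f e) = (muni (sub (psi a z) f))`_e.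
Proof.
suff E : map_poly (sub (shiftv a)) (muni (sub (psi z z) f)) = muni (sub (psi a z) f).
  by rewrite /Gp -E coef_map.
move: f; apply: meq.
- by move=> p q; rewrite !(rmorphD, muniD).
- by move=> p q; rewrite !(rmorphD, muniD).
- by move=> p q; rewrite !(rmorphM, muniM).
- by move=> p q; rewrite !(rmorphM, muniM).
- by move=> c; rewrite !comp_mpolyC muniC map_polyC /= comp_mpolyC.
move=> i; rewrite !subX /psi; case: (unliftP ord_max i) => [j ->|_].
  rewrite !mpolyC0 !add0r addr0 !(muniM, muniD, muniC) muniXmax lift_widen muniXw.
  by rewrite rmorphM /= map_polyX map_polyC /= subX /shiftv polyCD.
by rewrite muniXmax map_polyX.
Qed.

Lemma G_coef f e a b : (sub (shiftv a) (Gp f e))@_b = (sub (psi a z) f)@_(ext b e).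
Proof. by rewrite G_shift muni_coef. Qed.

Lemma psi_indep f e a c b : sle one e f ->
  (sub (psi a c) f)@_(ext b e) = (sub (psi a z) f)@_(ext b e).
Proof.
move=> hf; apply/eqP; rewrite -subr_eq0 -mcoeffB; apply/eqP.
apply: (sltE (w := @wL k) (j := e)); last by rewrite wtL_ext.
rewrite !subEX -sumrB; apply: slt_sum => m.
case: (boolP (m \in msupp f)) => mf; last first.
  by rewrite memN_msupp_eq0 // !scale0r subrr; apply: slt0.
rewrite -scalerBr; apply: sltZ; apply: (slt_mono (hf _ mf)).
have hs : forall c' : 'I_k -> K, forall i, sle (@wL k) 1 (psi a c' i).
  move=> c' i; rewrite /psi; case: (unliftP ord_max i) => [j ->|_]; last first.
    by rewrite -wL_max; apply: sleXU.
  apply: sleD; first exact: sleC.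
  rewrite -[1%N]/(1 + 0)%N; apply: sleM.
    by rewrite -wL_max; apply: sleXU.
  apply: sleD; last exact: sleC.
  by rewrite -(wL_lift j); apply: sleXU.
apply: diff_prod => //.
move=> i; rewrite /psi; case: (unliftP ord_max i) => [j ->|_]; last first.
  by rewrite subrr; apply: slt0.
by rewrite mpolyC0 add0r addrK; apply: sltC.
Qed.

Lemma psi00_X (m : 'X_{1..k.+1}) : sub (psi z z) 'X_[m] = 'X_[ext (restr m) (mdeg m)].
Proof.
rewrite subXm [RHS]mpolyXE_id !big_ord_recr /= ext_max.
have E1 : \prod_(j < k) psi z z (widen j) ^+ m (widen j) =
  Xm ^+ (\sum_(j < k) m (widen j)) * \prod_(j < k) 'X_(widen j) ^+ m (widen j).
  rewrite -prodrXr -big_split /=; apply: eq_bigr => j _.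
  by rewrite /psi -lift_widen liftK mpolyC0 add0r addr0 exprMn.
have E2 : \prod_(j < k) 'X_(widen j) ^+ (ext (restr m) (mdeg m)) (widen j) =
  \prod_(j < k) ('X_(widen j) : {mpoly K[k.+1]}) ^+ m (widen j).
  by apply: eq_bigr => j _; rewrite ext_widen mnmE.
rewrite E1 E2 [mdeg m]mdegE big_ord_recr exprD /= /psi unlift_none.
ring.
Qed.

Lemma sub_psi00 f :
  sub (psi z z) f = \sum_(m <- msupp f) f@_m *: 'X_[ext (restr m) (mdeg m)].
Proof. by rewrite subEX; apply: eq_bigr => m _; rewrite -subXm psi00_X. Qed.

Lemma G_nz f : f != 0 -> Gp f (msize f).-1 != 0.
Proof.
move=> fn0; set al := mlead f.
have alf : al \in msupp f by apply: mlead_supp.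
have dal : mdeg al = (msize f).-1 by rewrite -mlead_deg.
apply/eqP => G0; have := congr1 (mcoeff (restr al)) G0.
rewrite mcoeff0 Gp_coef sub_psi00 mcoeff_sum (bigD1_seq al) ?msupp_uniq //=.
rewrite mcoeffZ mcoeffX -dal eqxx mulr1 big1 ?addr0; last first.
  move=> m mal; rewrite mcoeffZ mcoeffX.
  case: eqP => [E|]; last by rewrite mulr0.
  have E1 : restr m = restr al by rewrite -(restr_ext (restr m) (mdeg m)) E restr_ext.
  have E2 : mdeg m = mdeg al by rewrite -(ext_max (restr m) (mdeg m)) E ext_max.
  have E3 : m ord_max = al ord_max.
    apply/eqP; rewrite -(eqn_add2l (mdeg (restr m))).
    by rewrite {2}E1 -!mdeg_ext !ext_restr E2.
  by move: mal; rewrite -(ext_restr m) -(ext_restr al) E1 E3 eqxx.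
by move=> /eqP; apply/negP; rewrite -mcoeff_msupp.
Qed.

Lemma G_deg f e b : sle one e f -> (e < mdeg b)%N -> (Gp f e)@_b = 0.
Proof.
move=> hf hb; rewrite Gp_coef; apply: (sleE (w := @wZ k) (j := e)); last by rewrite wtZ_ext.
apply: (sub_sle hf) => i; rewrite /psi; case: (unliftP ord_max i) => [j ->|_]; last first.
  by apply: (sle_mono (a := 0%N)) => //; rewrite -wZ_max; apply: sleXU.
apply: sleD; first exact: sleC.
rewrite -[1%N]/(0 + 1)%N; apply: sleM.
  by rewrite -wZ_max; apply: sleXU.
apply: sleD; last exact: sleC.
by rewrite -(wZ_lift j); apply: sleXU.
Qed.

End G.

Section Count.

Lemma card_bmnm k b : #|{: 'X_{1..k.+1 < b.+1}}| = 'C(b + k.+1, k.+1).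
Proof.
have -> : 'C(b + k.+1, k.+1) = 'C(b + k.+1, b) by rewrite -[in RHS]bin_sub ?leq_addr // addKn.
rewrite -(size_basis k.+1 b) cardE.
pose phi (m : 'X_{1..k.+1 < b.+1}) : 'X_{1..k.+2} := ext (val m) (b - mdeg (val m)).
rewrite -(size_map phi); apply: perm_size; apply: uniq_perm.
- rewrite map_inj_uniq ?enum_uniq // => m1 m2 /(congr1 (@restr _)).
  by rewrite !restr_ext => /val_inj.
- exact: uniq_basis.
move=> x; rewrite -basis_cover; apply/mapP/eqP => [[m _ ->]|dx].
  by rewrite mdeg_ext subnKC // -ltnS bmdeg.
have hb : (mdeg (restr x) < b.+1)%N.
  by rewrite ltnS -dx -{2}(ext_restr x) mdeg_ext leq_addr.
exists (BMultinom hb); first by rewrite mem_enum.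
rewrite /phi /= -{1}(ext_restr x); congr ext.
by rewrite -dx -[in mdeg x](ext_restr x) mdeg_ext addKn.
Qed.

End Count.

Section Exist.
Variable K : fieldType.
Variable n : nat.
Local Notation one := (fun _ : 'I_n => 1%N).

Definition ptv (x : 'rV[K]_n) : 'I_n -> K := fun i => x ord0 i.

Lemma exists_f d m (S : seq 'rV[K]_n) :
  (size S * #|{: 'X_{1..n < m}}| < #|{: 'X_{1..n < d.+1}}|)%N ->
  exists f : {mpoly K[n]},
    [/\ f != 0, sle one d f & forall x, x \in S -> sge one m (sub (shiftv (ptv x)) f)].
Proof.
move=> hc.
pose V := 'X_{1..n < d.+1}; pose W := ('I_(size S) * 'X_{1..n < m})%type.
pose M : 'M[K]_(#|{: V}|, #|{: W}|) := \matrix_(i < #|{: V}|, j < #|{: W}|)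
  (sub (shiftv (ptv (nth 0 S (enum_val j : W).1))) 'X_[val (enum_val i : V)])@_(val (enum_val j : W).2).
have hW : #|{: W}| = (size S * #|{: 'X_{1..n < m}}|)%N by rewrite card_prod card_ord.
pose u := nz_row (kermx M).
have un0 : u != 0.
  rewrite nz_row_eq0 -mxrank_eq0 mxrank_ker subn_eq0 -ltnNge.
  by apply: (leq_ltn_trans (rank_leq_col M)); rewrite hW.
have uM : u *m M = 0 by apply/sub_kermxP; exact: nz_row_sub.
pose f : {mpoly K[n]} := \sum_(i < #|{: V}|) u 0 i *: 'X_[val (enum_val i : V)].
have fc : forall i, f@_(val (enum_val i : V)) = u 0 i.
  move=> i; rewrite mcoeff_sum (bigD1 i) //= mcoeffZ mcoeffX eqxx mulr1 big1 ?addr0 // => j ji.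
  rewrite mcoeffZ mcoeffX; case: eqP => [/val_inj/enum_val_inj E|]; last by rewrite mulr0.
  by rewrite E eqxx in ji.
exists f; split.
- apply: contraNneq un0 => f0; apply/eqP/rowP => i.
  by rewrite -fc f0 mcoeff0 mxE.
- apply: sle_sum => i; apply: sleZ => mono; rewrite msuppX inE => /eqP ->.
  by rewrite wt1 -ltnS; exact: bmdeg.
move=> x xS mono hmono; rewrite leqNgt; apply/negP => lt.
move: hmono; rewrite mcoeff_msupp; apply/negP; rewrite negbK.
rewrite wt1 in lt.
have hs : (index x S < size S)%N by rewrite index_mem.
pose j := enum_rank ((Ordinal hs, BMultinom lt) : W).
have := congr1 (fun A : 'M[K]_(1, #|{: W}|) => A 0 j) uM.
rewrite !mxE => E; rewrite -[X in _ == X]E.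
have sum_sub : forall (I : Type) (r : seq I) (F : I -> {mpoly K[n]}) (h : 'I_n -> {mpoly K[n]}),
    sub h (\sum_(i <- r) F i) = \sum_(i <- r) sub h (F i).
  move=> I r F h; elim: r => [|a r IH]; first by rewrite !big_nil comp_mpoly0.
  by rewrite !big_cons subD IH.
rewrite /f sum_sub mcoeff_sum; apply/eqP; apply: eq_bigr => i _.
by rewrite subZ mcoeffZ mxE enum_rankK /= nth_index.
Qed.

End Exist.

Section Core.
Variable K : fieldType.
Local Notation z := (fun _ => 0 : K).

Lemma core (k N r : nat) (A : nat -> seq K) (S : seq 'rV[K]_k.+1) :
  (0 < N)%N -> (0 < r)%N -> (forall j, uniq (A j)) -> (forall j, size (A j) = N) ->
  (forall a : 'I_k -> K, (forall i : 'I_k, a i \in A i) ->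
    exists c : 'I_k -> K, exists mus : seq K, [/\ uniq mus, size mus = N &
      forall mu, mu \in mus -> exists2 x, x \in S & forall i, x ord0 i = pt a c mu i]) ->
  ('C(r * N + k, k.+1) <= 'C(2 * r + k - 1, k.+1) * size S)%N.
Proof.
move=> N0 r0 uA sA hL.
rewrite leqNgt; apply/negP => hlt.
set d := (r * N).-1; set m := (2 * r).-1.
have rN : (0 < r * N)%N by rewrite muln_gt0 r0 N0.
have hd : #|{: 'X_{1..k.+1 < d.+1}}| = 'C(r * N + k, k.+1).
  by rewrite card_bmnm; congr binomial; rewrite /d; lia.
have hm : #|{: 'X_{1..k.+1 < m}}| = 'C(2 * r + k - 1, k.+1).
  have -> : m = (2 * r - 2).+1 by rewrite /m; lia.
  by rewrite card_bmnm; congr binomial; lia.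
have [f [fn0 fd fS]] := exists_f (d := d) (m := m) (S := S) (K := K) (n := k.+1) ltac:(by rewrite hd hm mulnC).
set e := (msize f).-1.
have fe : sle (fun _ => 1%N) e f.
  move=> mono hmono; rewrite wt1 -ltnS /e prednK ?msize_mdeg_lt //.
  by rewrite lt0n msize_poly_eq0.
have ed : (e < r * N)%N.
  have := fd _ (mlead_supp fn0); rewrite wt1 /e -mlead_deg //= /d; lia.
have := G_nz fn0; rewrite -/e => /eqP; apply.
apply: (grid_lemma N0 uA sA (r := r)).
  by move=> b hb; apply: G_deg fe _; lia.
move=> a ha b hb; rewrite G_coef.
have [c [mus [umus smus hmus]]] := hL a ha.
rewrite -(@psi_indep _ _ _ _ _ c) //.
apply: (line_lemma (m := m) (r := r) (N := N) (mus := mus)) => //.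
  move=> mu /hmus [x xS hx]; have := fS x xS.
  by rewrite (@sub_ext _ _ _ _ (shiftv (pt a c mu))) // => i; rewrite /shiftv /ptv hx.
move=> j hj; apply: (leq_trans ed); rewrite [X in (X <= _)%N]mulnC leq_mul2l /m.
by apply/orP; right; lia.
Qed.

End Core.

Unset Implicit Arguments.

Theorem theorem3p2 (K : fieldType) (n N : nat)
  (L : 'rV[K]_n * 'rV[K]_n -> Prop) (S : {fset 'rV[K]_n}) :
  (2 <= n)%N -> (0 < N)%N ->
  (forall uv, L uv -> (snd uv) != 0) ->
  (forall uv, L uv -> incident_atleast N S uv) ->
  contains_grid N (direction_set L) ->
  forall r : nat, (0 < r)%N ->
  ('C(r * N + n - 1, n) <= 'C(2 * r + n - 2, n) * #|` S|)%N.
Proof.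
case: n L S => [|k] L S hn N0 _ hI [B [A' [Bu hA hD]]] r r0; first by [].
have k0 : (0 < k)%N by [].
pose A (j : nat) : seq K := enum_fset (A' (inord (if (j < k)%N then j else 0%N))).
have uA j : uniq (A j) by apply: fset_uniq.
have sA j : size (A j) = N.
  rewrite /A hA // inordK; case: ifP => //=; lia.
pose Binv := invmx B.
pose S' := [seq x *m Binv | x <- enum_fset S].
have := core (k := k) (N := N) (r := r) (A := A) (S := S') N0 r0 uA sA.
have E1 : (r * N + k.+1 - 1 = r * N + k)%N by lia.
have E2 : (2 * r + k.+1 - 2 = 2 * r + k - 1)%N by lia.
rewrite size_map E1 E2; apply.
move=> a ha.
pose av : 'rV[K]_k.+1 := \row_i extv a 1 i.
have avl : forall j, av ord0 (lift ord_max j) = a j.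
  by move=> j; rewrite mxE /extv liftK.
have avm : av ord0 ord_max = 1 by rewrite mxE /extv unlift_none.
have hDa : direction_set L (av *m B).
  apply: hD.
    move=> i hi; case: (unliftP ord_max i) => [j ej|ei]; last first.
      by move: hi; rewrite ei ltnn.
    rewrite ej avl.
    have -> : lift ord_max j = (inord j : 'I_k.+1).
      apply: val_inj; rewrite /= inordK; last exact: (leq_trans (ltn_ord j) (leqnSn _)).
      by rewrite /bump leqNgt ltn_ord.
    by have := ha j; rewrite /A ltn_ord.
  move=> i hi; have -> : i = ord_max by apply: val_inj.
  by rewrite avm.
case: hDa => uv [Luv [c0 c0n0 hc0]].
have [T [TS NT Ton]] := hI uv Luv.
pose w := uv.1 *m Binv.
have v_eq : uv.2 *m Binv = c0^-1 *: av.
  have -> : uv.2 = c0^-1 *: (av *m B) by rewrite hc0 scalerA mulVf // scale1r.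
  by rewrite -scalemxAl mulmxK.
exists (fun j => w ord0 (lift ord_max j) - w ord0 ord_max * a j).
exists (take N [seq (x *m Binv) ord0 ord_max | x <- enum_fset T]).
split.
- apply: take_uniq; rewrite map_inj_in_uniq ?fset_uniq //.
  move=> x x' /Ton [lam ->] /Ton [lam' ->].
  rewrite !mulmxDl -!scalemxAl v_eq !mxE extv_max !mulr1 => /addrI E.
  have El : lam = lam' by apply: (mulIf (invr_neq0 c0n0)).
  by rewrite El.
- by rewrite size_takel // size_map.
move=> mu /mem_take /mapP [x xT ->].
exists (x *m Binv).
  by apply: map_f; move/fsubsetP: TS; apply.
have [lam xe] := Ton x xT.
move=> i; rewrite xe mulmxDl -scalemxAl v_eq /pt.
case: (unliftP ord_max i) => [j ->|->]; last by [].
rewrite ?liftK /w !mxE /extv ?liftK ?unlift_none.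
ring.
Qed.
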